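(* Let $K\ge2$ and $b\in\mathbb{R}$. The operator $A+B$ on $\ell^2(\mathcal{C})$ has only pure point spectrum, and $\ell^2(\mathcal{C})$ has an orthonormal basis of eigenfunctions of $A+B$ that are compactly (finitely) supported.
   Context: The canopy graph $\mathcal{C}$: starting from an infinite outermost layer $\partial\mathcal{C}$, each layer is partitioned into sets of $K$ elements, the elements of each set being joined to a common vertex of the next layer, recursively for infinitely many layers. $A$ is the adjacency operator of $\mathcal{C}$, $(A\psi)(x)=\sum_{y:\mathrm{dist}(x,y)=1}\psi(y)$, and $B$ is multiplication by the constant $b$ on $\partial\mathcal{C}$ and by $0$ elsewhere. *)

(* Defs.v *)
From HB Require Import structures.
From mathcomp Require Import all_boot all_order all_algebra.
From mathcomp Require Import reals complex.
Set Implicit Arguments. Unset Strict Implicit. Unset Printing Implicit Defensive.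
Import Order.TTheory GRing.Theory Num.Theory.
Local Open Scope ring_scope.
Local Open Scope complex_scope.

(* A vertex is a pair (n, j) : nat * nat, where n is the layer (n = 0 is the
   outermost layer \partial C) and j indexes the (countably infinitely many)
   vertices of layer n.  Layer n is partitioned into the blocks
   {K*j, ..., K*j + K-1}, and the K elements of block j are all joined to the
   common vertex (n+1, j) of the next layer.    *)
Definition vertex := (nat * nat)%type.

Definition parent (K : nat) (x : vertex) : vertex := (x.1.+1, (x.2 %/ K)%N).

Definition adj (K : nat) (x y : vertex) : bool :=
  (y == parent K x) || (x == parent K y).

(* the (finite, duplicate-free) list of neighbours of x, i.e. of all y with
   adj K x y (for K >= 1) *)
Definition nbrs (K : nat) (x : vertex) : seq vertex :=
  parent K x :: (if x.1 is n.+1 then [seq (n, K * x.2 + i)%N | i <- iota 0 K]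
                 else [::]).

Section Ops.
Variable R : realType.
Local Notation C := R[i].

Definition adjA (K : nat) (psi : vertex -> C) : vertex -> C :=
  fun x => \sum_(y <- nbrs K x) psi y.

Definition potB (b : R) (psi : vertex -> C) : vertex -> C :=
  fun x => if x.1 == 0%N then b%:C * psi x else 0.

Definition AplusB (K : nat) (b : R) (psi : vertex -> C) : vertex -> C :=
  fun x => adjA K psi x + potB b psi x.

Definition sqnorm (z : C) : R := complex.Re z ^+ 2 + complex.Im z ^+ 2.

(* psi belongs to l^2(C): the sums of |psi x|^2 over finite sets of vertices
   are uniformly bounded (equivalently sum_x |psi x|^2 < oo). *)
Definition l2 (psi : vertex -> C) : Prop :=
  exists M : R, forall s : seq vertex, uniq s ->
    \sum_(x <- s) sqnorm (psi x) <= M.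

(* <f, g> computed over a duplicate-free list s containing the support of g *)
Definition finner (s : seq vertex) (f g : vertex -> C) : C :=
  \sum_(x <- s) f x * conjc (g x).

(* The family e (indexed by an arbitrary type I)
   has: finite supports (contained in the duplicate-free lists supp i);
   each e i is an eigenfunction of A + B with eigenvalue lam i;
   orthonormality; and completeness (the only l^2 vector orthogonal to all
   e i is 0, i.e. the orthonormal family is maximal = an orthonormal basis). *)
Definition has_fin_supp_eigen_ONB (K : nat) (b : R) : Prop :=
  exists (I : Type) (e : I -> vertex -> C) (lam : I -> C)
         (supp : I -> seq vertex),
    [/\ (forall i, uniq (supp i) /\ forall x, x \notin supp i -> e i x = 0),
        (forall i x, AplusB K b (e i) x = lam i * e i x),
        (forall i, finner (supp i) (e i) (e i) = 1),
        (forall i j, i <> j -> finner (supp j) (e i) (e j) = 0) &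
        (forall psi, l2 psi ->
           (forall i, finner (supp i) psi (e i) = 0) -> forall x, psi x = 0)].
End Ops.

(* Main.v *)
Require Import Defs.
From HB Require Import structures.
From mathcomp Require Import all_boot all_order all_algebra.
From mathcomp Require Import reals complex.
From mathcomp Require Import mxred sesquilinear spectral.
From mathcomp Require Import ring.
From Stdlib Require ClassicalEpsilon.
Set Implicit Arguments. Unset Strict Implicit. Unset Printing Implicit Defensive.
Import Order.TTheory GRing.Theory Num.Theory.
Local Open Scope ring_scope.

Section Mat.
Local Open Scope sesquilinear_scope.
Variable C : numClosedFieldType.

Lemma adjM m n p (A : 'M[C]_(m, n)) (B : 'M[C]_(n, p)) :
  (A *m B)^t* = B^t* *m A^t*.
Proof. by rewrite trmx_mul map_mxM. Qed.

Lemma inv_comm N (M P : 'M[C]_N) : M^t* = M -> P^t* = P ->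
  P *m M *m P = P *m M -> M *m P = P *m M.
Proof.
move=> hM hP h.
have h2 : (P *m M *m P)^t* = (P *m M)^t* by rewrite h.
rewrite !adjM hM hP mulmxA in h2.
by rewrite -h2 h.
Qed.

Lemma simdiag N (M P Q : 'M[C]_N) :
  M^t* = M -> P^t* = P -> Q^t* = Q ->
  P *m M *m P = P *m M -> Q *m M *m Q = Q *m M -> Q *m P = Q ->
  exists2 U : 'M[C]_N, U *m U^t* = 1%:M &
    forall X, X \in [:: M; P; Q] -> X^t* = X /\
      forall i j, i != j -> (U *m X *m U^t*) i j = 0.
Proof.
move=> hM hP hQ hPM hQM hQP.
have cMP := inv_comm hM hP hPM.
have cMQ := inv_comm hM hQ hQM.
have cPQ : P *m Q = Q *m P.
  have h2 : (Q *m P)^t* = Q^t* by rewrite hQP.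
  by rewrite adjM hP hQ in h2; rewrite h2 hQP.
have hc : {in [:: M; P; Q] &, forall A B, comm_mx A B}.
  move=> A B; rewrite !inE => /or3P[]/eqP-> /or3P[]/eqP->; rewrite /comm_mx //.
have [U Uu hU] := cotrigonalization hc.
exists U; first exact/unitarymxP.
move=> X HX; have hX : X^t* = X by move: HX; rewrite !inE => /or3P[]/eqP->.
split => //.
have := allP hU X HX; rewrite /= /similar_to conjumx ?unitarymx_unit //.
rewrite invmx_unitary // => /is_trig_mxP tr.
set Y := U *m X *m U^t*.
have hY : Y^t* = Y by rewrite /Y !adjM trmxCK hX mulmxA.
move=> i j; rewrite neq_ltn => /orP[lij|lji]; first exact: tr.

move: (tr j i lji); rewrite -/Y => t.
by rewrite -hY mxE mxE t conjC0.
Qed.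
End Mat.

Section Gen.
Local Open Scope sesquilinear_scope.
Variable R : realType.
Local Notation C := R[i].

Definition app (s : seq vertex) (k : vertex -> vertex -> C) (f : vertex -> C)
  (x : vertex) : C := \sum_(y <- s) k x y * f y.

Variable s : seq vertex.
Hypothesis us : uniq s.
Local Notation N := (size s).
Local Notation x0 := ((0%N, 0%N) : vertex).

Definition Mat (k : vertex -> vertex -> C) : 'M[C]_N :=
  \matrix_(a, b) k (nth x0 s b) (nth x0 s a).
Definition vec (f : vertex -> C) : 'rV[C]_N := \row_a f (nth x0 s a).
Definition fn (u : 'rV[C]_N) (y : vertex) : C :=
  \sum_(a < N) (nth x0 s a == y)%:R * u 0 a.

Lemma sum_s (F : vertex -> C) : \sum_(y <- s) F y = \sum_(a < N) F (nth x0 s a).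
Proof. by rewrite (big_nth x0) big_mkord. Qed.

Lemma vec_app k f : vec (app s k f) = vec f *m Mat k.
Proof.
apply/rowP => b; rewrite !mxE /app sum_s; apply: eq_bigr => a _.
by rewrite !mxE mulrC.
Qed.

Lemma fn_nth u (b : 'I_N) : fn u (nth x0 s b) = u 0 b.
Proof.
rewrite /fn (bigD1 b) //= eqxx mul1r big1 ?addr0 // => a /negbTE ne.
rewrite nth_uniq //; case: eqP => [/val_inj e|]; last by rewrite mul0r.
by rewrite e eqxx in ne.
Qed.

Lemma fn_out u y : y \notin s -> fn u y = 0.
Proof.
move=> ys; rewrite /fn big1 // => a _.
case: eqP => [e|]; last by rewrite mul0r.
by move: ys; rewrite -e mem_nth.
Qed.

Lemma vec_fn u : vec (fn u) = u.
Proof. by apply/rowP => b; rewrite mxE fn_nth. Qed.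

Lemma mx_ext (A B : 'M[C]_N) : (forall u : 'rV_N, u *m A = u *m B) -> A = B.
Proof. by move=> h; apply/row_matrixP => i; rewrite !rowE h. Qed.

Lemma vec_eq f g : (forall x, x \in s -> f x = g x) -> vec f = vec g.
Proof. by move=> h; apply/rowP => b; rewrite !mxE h // mem_nth. Qed.

Lemma nth_index_s x : x \in s -> exists b : 'I_N, x = nth x0 s b.
Proof.
move=> xs; have hb : (index x s < N)%N by rewrite index_mem.
by exists (Ordinal hb); rewrite /= nth_index.
Qed.

Definition herm (k : vertex -> vertex -> C) :=
  forall x y, x \in s -> y \in s -> k y x = conjc (k x y).

Lemma Mat_herm k : herm k -> (Mat k)^t* = Mat k.
Proof.
move=> h; apply/matrixP => a b; rewrite !mxE (h (nth x0 s b) (nth x0 s a)).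
- by rewrite conjCK.
- by rewrite mem_nth.
- by rewrite mem_nth.
Qed.


Lemma insub_ord a (h : (a < N)%N) : (insub a : option 'I_N) = Some (Ordinal h).
Proof. by rewrite insubT. Qed.

Lemma generic (kM kP kQ : vertex -> vertex -> C) :
  herm kM -> herm kP -> herm kQ ->
  (forall f x, x \in s -> app s kP (app s kM (app s kP f)) x = app s kM (app s kP f) x) ->
  (forall f x, x \in s -> app s kQ (app s kM (app s kQ f)) x = app s kM (app s kQ f) x) ->
  (forall f x, x \in s -> app s kP (app s kQ f) x = app s kQ f x) ->
  exists (e : nat -> vertex -> C) (dM dP dQ : nat -> C),
  [/\ (forall a x, x \notin s -> e a x = 0),
      (forall a b, (a < N)%N -> (b < N)%N -> finner s (e a) (e b) = (a == b)%:R),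
      (forall a x, (a < N)%N -> x \in s -> [/\ app s kM (e a) x = dM a * e a x,
           app s kP (e a) x = dP a * e a x & app s kQ (e a) x = dQ a * e a x]) &
      (forall f, (forall a, (a < N)%N -> finner s f (e a) = 0) ->
         forall x, x \in s -> f x = 0)].
Proof.
move=> hM hP hQ hPM hQM hQP.
have tPM : Mat kP *m Mat kM *m Mat kP = Mat kP *m Mat kM.
  apply: mx_ext => u; have := vec_eq (hPM (fn u)).
  by rewrite !vec_app vec_fn !mulmxA.
have tQM : Mat kQ *m Mat kM *m Mat kQ = Mat kQ *m Mat kM.
  apply: mx_ext => u; have := vec_eq (hQM (fn u)).
  by rewrite !vec_app vec_fn !mulmxA.
have tQP : Mat kQ *m Mat kP = Mat kQ.
  apply: mx_ext => u; have := vec_eq (hQP (fn u)).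
  by rewrite !vec_app vec_fn !mulmxA.
have [U hUU hD] := simdiag (Mat_herm hM) (Mat_herm hP) (Mat_herm hQ) tPM tQM tQP.
have hUU' : U^t* *m U = 1%:M by apply: mulmx1C.
pose e a y := if (insub a : option 'I_N) is Some i then fn (row i U) y else 0.
pose d k a := if (insub a : option 'I_N) is Some i then (U *m Mat k *m U^t*) i i else 0.
have eE a (h : (a < N)%N) : e a = fn (row (Ordinal h) U).
  by rewrite /e insub_ord.
have dE k a (h : (a < N)%N) : d k a = (U *m Mat k *m U^t*) (Ordinal h) (Ordinal h).
  by rewrite /d insub_ord.
have eig k : [\/ k = kM, k = kP | k = kQ] -> forall a x, (a < N)%N -> x \in s ->
    app s k (e a) x = d k a * e a x.
  move=> hk a x ha xs; have [b ->] := nth_index_s xs.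
  have hX : Mat k \in [:: Mat kM; Mat kP; Mat kQ].
    by case: hk => ->; rewrite !inE eqxx ?orbT.
  have [_ hz] := hD _ hX.
  have -> : app s k (e a) (nth x0 s b) = (row (Ordinal ha) (U *m Mat k)) 0 b.
    by rewrite row_mul -(vec_fn (row _ U)) -(eE a ha) -vec_app mxE.
  rewrite (eE a ha) fn_nth dE.
  set D := U *m Mat k *m U^t*.
  have -> : U *m Mat k = D *m U by rewrite /D -mulmxA hUU' mulmx1.
  rewrite mxE mxE (bigD1 (Ordinal ha)) //= big1 ?addr0.
  - by rewrite [row _ U 0 b]mxE.
  - by move=> c hc; rewrite hz ?mul0r // eq_sym.
exists e, (d kM), (d kP), (d kQ); split.
- move=> a x xs; rewrite /e; case: insub => [i|] //; exact: fn_out.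
- move=> a b ha hb; rewrite (eE a ha) (eE b hb) /finner sum_s.
  have /matrixP /(_ (Ordinal ha) (Ordinal hb)) := hUU; rewrite !mxE => <-.
  apply: eq_bigr => c _; rewrite !fn_nth !mxE; done.
- move=> a x ha xs; split; apply: eig => //; by [apply: Or31|apply: Or32|apply: Or33].
- move=> f hf x xs; have [b ->] := nth_index_s xs.
  have h0 : vec f *m U^t* = 0.
    apply/rowP => i; rewrite [RHS]mxE -(hf i (ltn_ord i)).
    rewrite (eE i (ltn_ord i)) /finner sum_s mxE.
    apply: eq_bigr => c _; rewrite fn_nth !mxE.
    by rewrite (_ : Ordinal (ltn_ord i) = i) //; apply: val_inj.
  have : vec f = vec f *m U^t* *m U by rewrite -mulmxA hUU' mulmx1.
  rewrite h0 mul0mx => /rowP /(_ b); by rewrite !mxE.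
Qed.
End Gen.

Local Open Scope complex_scope.

Lemma sum_pick (T : eqType) (V : nmodType) (s : seq T) (x : T) (F : T -> V) :
  uniq s -> x \in s -> \sum_(y <- s) (if x == y then F y else 0) = F x.
Proof.
move=> us xs; rewrite (big_rem x xs) /= eqxx big_seq_cond big1 ?addr0 //.
move=> y /andP[]; rewrite (mem_rem_uniq _ us) inE => /andP[nyx _] _.
by rewrite eq_sym (negbTE nyx).
Qed.

Lemma sum_pick0 (T : eqType) (V : nmodType) (s : seq T) (x : T) (F : T -> V) :
  x \notin s -> \sum_(y <- s) (if x == y then F y else 0) = 0.
Proof.
move=> xs; rewrite big_seq_cond big1 // => y /andP[ys _].
by case: eqP => // e; move: xs; rewrite e ys.
Qed.

Lemma sum_same (T : eqType) (V : nmodType) (s t : seq T) (H : T -> V) :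
  uniq s -> uniq t -> (forall y, y \notin s -> H y = 0) ->
  (forall y, y \notin t -> H y = 0) ->
  \sum_(y <- s) H y = \sum_(y <- t) H y.
Proof.
move=> us ut hs ht.
have e1 : \sum_(y <- s) H y = \sum_(y <- [seq y <- s | y \in t]) H y.
  by rewrite big_filter [RHS]big_mkcond /=; apply: eq_bigr => y _; case: ifP => // /negbT /ht.
have e2 : \sum_(y <- t) H y = \sum_(y <- [seq y <- t | y \in s]) H y.
  by rewrite big_filter [RHS]big_mkcond /=; apply: eq_bigr => y _; case: ifP => // /negbT /hs.
rewrite e1 e2; apply: perm_big; apply: uniq_perm; rewrite ?filter_uniq //.
by move=> y; rewrite !mem_filter andbC.
Qed.

Section Graph.
Variable R : realType.
Local Notation C := R[i].
Variable K : nat.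
Hypothesis K2 : (2 <= K)%N.
Variable b : R.

Lemma K0 : (0 < K)%N. Proof. by apply: leq_trans K2. Qed.

Definition Dl (n : nat) : seq vertex :=
  [seq (k, j) | k <- iota 0 n, j <- iota 0 (K ^ (n - k))].

Lemma mem_Dl n x : (x \in Dl n) = (x.1 < n)%N && (x.2 < K ^ (n - x.1))%N.
Proof.
apply/allpairsPdep/andP => [[k [j [hk hj ->]]]|[h1 h2]].
  by move: hk hj; rewrite !mem_iota /= !add0n.
by exists x.1, x.2; rewrite !mem_iota /= !add0n h1 h2; case: x {h1 h2}.
Qed.

Lemma uniq_Dl n : uniq (Dl n).
Proof.
apply: allpairs_uniq_dep; first exact: iota_uniq.
  by move=> k _; exact: iota_uniq.
by move=> [k1 j1] [k2 j2] _ _ /= [-> ->].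
Qed.

Lemma sum_Dl n (F : vertex -> C) :
  \sum_(y <- Dl n) F y = \sum_(k <- iota 0 n) \sum_(j <- iota 0 (K ^ (n - k))) F (k, j).
Proof. by rewrite big_allpairs_dep. Qed.

Lemma Dl_sub n x : x \in Dl n -> x \in Dl n.+1.
Proof.
rewrite !mem_Dl => /andP[h1 h2]; rewrite (ltn_trans h1) //=.
apply: leq_trans h2 _; apply: leq_pexp2l; first exact: K0.
by rewrite subSn ?leqnSn // ltnW.
Qed.

Lemma Dl_subn m n x : (m <= n)%N -> x \in Dl m -> x \in Dl n.
Proof.
elim: n => [|n IH]; first by rewrite leqn0 => /eqP ->.
rewrite leq_eqVlt => /orP[/eqP -> //|]; rewrite ltnS => h xm.
by apply: Dl_sub; apply: IH.
Qed.


Lemma parent_in n x : x \in Dl n -> (parent K x \in Dl n) = (x.1.+1 < n)%N.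
Proof.
rewrite !mem_Dl /parent /= => /andP[h1 h2].
case: (ltnP x.1.+1 n) => h3 //=.
by rewrite ltn_divLR ?K0 // -expnSr subnSK.
Qed.

Lemma parent_in_imp n x : parent K x \in Dl n -> x \in Dl n.
Proof.
rewrite !mem_Dl /parent /= => /andP[h1 h2].
rewrite (ltn_trans (ltnSn _) h1) /=.
by move: h2; rewrite ltn_divLR ?K0 // -expnSr subnSK // (ltn_trans (ltnSn _) h1).
Qed.

Lemma out_parent n x y : x \notin Dl n -> y \in Dl n ->
  (x == parent K y) = (x == (n, 0%N)) && (y.1 == n.-1).
Proof.
move=> xn yn; have := yn; rewrite mem_Dl => /andP[h1 h2].
apply/eqP/andP => [ex|[/eqP -> /eqP ey]].
  have hp : ~~ (y.1.+1 < n)%N.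
    by apply/negP => h; move: xn; rewrite ex (parent_in yn) h.
  have ey1 : y.1.+1 = n by apply/eqP; rewrite eqn_leq h1 leqNgt hp.
  move: h2; rewrite -ey1 subSn // subnn expn1 => h2.
  by rewrite ex /parent /= ey1 divn_small // eqxx /= -ey1.
have hn : y.1.+1 = n by move: h1; rewrite ey; case: (n).
move: h2; rewrite -hn subSn // subnn expn1 => h2.
by rewrite /parent hn divn_small.
Qed.

Lemma cnt_div (m q : nat) :
  \sum_(j <- iota 0 (K * m)) (((j %/ K)%N == q)%:R : C) = ((K * (q < m))%N)%:R.
Proof.
elim: m => [|m IH]; first by rewrite muln0 big_nil.
rewrite mulnS addnC iotaD big_cat IH /= add0n.
rewrite (eq_big_seq (fun _ => ((m == q)%:R : C))); last first.
  move=> j; rewrite mem_iota => /andP[l1 l2].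
  have -> : j = (m * K + (j - K * m))%N by rewrite mulnC subnKC.
  rewrite divnMDl ?K0 // divn_small ?addn0 //.
  by rewrite ltn_subLR // -mulnC.
rewrite big_const_seq count_predT size_iota.
have -> : forall (x : C) n, iter n (GRing.add x) 0 = x *+ n.
  by move=> x; elim=> [|n IHn] //=; rewrite IHn mulrS.
have -> : ((m == q)%:R : C) *+ K = ((m == q) * K)%N%:R by rewrite natrM mulr_natr.
rewrite -natrD; congr (_%:R).
rewrite ltnS [(q <= m)%N]leq_eqVlt (eq_sym q); case: eqP => [->|_] /=.
  by rewrite ltnn muln1 muln0 add0n mul1n.
by rewrite mul0n addn0.
Qed.


Definition lsum (s : seq vertex) (f : vertex -> C) (k : nat) : C :=
  \sum_(y <- s) (y.1 == k)%:R * f y.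
Definition kM (x y : vertex) : C :=
  (adj K x y)%:R + ((x == y) && (x.1 == 0%N))%:R * b%:C.
Definition cP n (k : nat) : C := ((K ^ (n - k))%N)%:R.
Definition kP n (x y : vertex) : C :=
  (x == y)%:R - (x.1 == y.1)%:R * (cP n x.1)^-1.
Definition kQ n (x y : vertex) : C :=
  ((x \in Dl n) && (y \in Dl n))%:R * kP n x y.

Lemma cP_neq0 n k : cP n k != 0.
Proof. by rewrite /cP pnatr_eq0 -lt0n expn_gt0 K0. Qed.

Lemma sum_ind (T : eqType) (s : seq T) x (F : T -> C) : uniq s ->
  \sum_(y <- s) (x == y)%:R * F y = if x \in s then F x else 0.
Proof.
move=> us; have -> : \sum_(y <- s) (x == y)%:R * F y =
    \sum_(y <- s) (if x == y then F y else 0).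
  by apply: eq_bigr => y _; case: eqP => _; rewrite ?mul1r ?mul0r.
by case: ifP => xs; [apply: sum_pick | apply: sum_pick0; rewrite xs].
Qed.

Lemma sum_const_iota a m (c : C) : \sum_(j <- iota a m) c = c *+ m.
Proof.
rewrite big_const_seq count_predT size_iota.
by elim: m => [|m IH] //=; rewrite IH mulrS.
Qed.

Lemma cnt_layer n k :
  \sum_(y <- Dl n) ((y.1 == k)%:R : C) = ((k < n) * K ^ (n - k))%N%:R.
Proof.
rewrite sum_Dl.
rewrite (eq_bigr (fun k' => (k' == k)%:R * ((K ^ (n - k'))%N)%:R)); last first.
  move=> k' _; rewrite sum_const_iota.
  by rewrite mulr_natr.
rewrite (eq_bigr (fun k' => (k == k')%:R * ((K ^ (n - k'))%N)%:R)); last first.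
  by move=> k' _; rewrite eq_sym.
rewrite sum_ind ?iota_uniq // mem_iota add0n /=.
by case: (k < n)%N; rewrite ?mul1n ?mul0n.
Qed.

Lemma lsum_out n f k : (n <= k)%N -> lsum (Dl n) f k = 0.
Proof.
move=> hk; rewrite /lsum big_seq big1 // => y; rewrite mem_Dl => /andP[h _].
by rewrite (_ : (y.1 == k) = false) ?mul0r //; apply/negbTE; rewrite neq_ltn (leq_trans h hk).
Qed.

Lemma appP n f x : x \in Dl n ->
  app (Dl n) (kP n) f x = f x - lsum (Dl n) f x.1 * (cP n x.1)^-1.
Proof.
move=> xn; rewrite /app /kP.
under eq_bigr do rewrite mulrBl.
rewrite sumrB sum_ind ?uniq_Dl // xn mulr_suml /lsum; congr (_ - _).
by apply: eq_bigr => y _; rewrite eq_sym mulrAC.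
Qed.

Lemma lsumP n f k : lsum (Dl n) (app (Dl n) (kP n) f) k = 0.
Proof.
rewrite /lsum (eq_big_seq (fun y => (y.1 == k)%:R * (f y - lsum (Dl n) f k * (cP n k)^-1))); last first.
  move=> y yn; rewrite appP //; case: eqP => [->|_] //; by rewrite !mul0r.
under eq_bigr do rewrite mulrBr.
rewrite sumrB -mulr_suml cnt_layer -/(lsum (Dl n) f k).
case: (ltnP k n) => hk; last by rewrite lsum_out // !mul0r subr0.
rewrite mul1n mulrA mulrC mulrA mulVf ?cP_neq0 // mul1r.
by rewrite /cP subrr.
Qed.


Lemma mem_nbrs x y : (y \in nbrs K x) = adj K x y.
Proof.
rewrite /nbrs /adj inE; congr (_ || _).
case: x => [[|n] x2] /=; first by rewrite in_nil /parent; case: y.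
case: y => [y1 y2]; rewrite /parent /=.
apply/mapP/eqP => [[i hi [-> ->]]|[e1 e2]].
  move: hi; rewrite mem_iota add0n => /andP[_ hi].
  by rewrite mulnC divnMDl ?K0 // divn_small // addn0.
exists (y2 %% K)%N; first by rewrite mem_iota add0n ltn_pmod ?K0.
by rewrite e1 e2 mulnC -divn_eq.
Qed.

Lemma uniq_nbrs x : uniq (nbrs K x).
Proof.
rewrite /nbrs; case: x => [[|n] x2] //=.
apply/andP; split.
  by apply/negP => /mapP [i _ [/eqP]]; rewrite /parent /= -[n.+2]addn2 -{2}[n]addn0 eqn_add2l.
by rewrite map_inj_uniq ?iota_uniq // => i j [] /addnI.
Qed.

Lemma adjA_sum s (f : vertex -> C) x : uniq s -> (forall y, y \notin s -> f y = 0) ->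
  adjA K f x = \sum_(y <- s) (adj K x y)%:R * f y.
Proof.
move=> us hs; rewrite /adjA.
rewrite (eq_big_seq (fun y => (adj K x y)%:R * f y)); last first.
  by move=> y; rewrite mem_nbrs => ->; rewrite mul1r.
apply: sum_same => //; first exact: uniq_nbrs.
  by move=> y; rewrite mem_nbrs => /negbTE ->; rewrite mul0r.
by move=> y /hs ->; rewrite mulr0.
Qed.

Lemma AB_app s (f : vertex -> C) x : uniq s -> (forall y, y \notin s -> f y = 0) ->
  AplusB K b f x = app s kM f x.
Proof.
move=> us hs; rewrite /AplusB (adjA_sum x us hs) /app /kM /potB.
under [in RHS]eq_bigr do rewrite mulrDl.
rewrite big_split /=; congr (_ + _).
rewrite (eq_bigr (fun y => ((x.1 == 0%N)%:R * b%:C) * ((x == y)%:R * f y))); last first.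
  by move=> y _; rewrite -mulnb natrM; case: (x == y); case: (x.1 == 0%N);
     rewrite ?mul1r ?mul0r ?mulr1 ?mulr0.
rewrite -mulr_sumr sum_ind //.
case: (boolP (x \in s)) => xs; last rewrite (hs _ xs);
  by case: eqP => _; rewrite ?mul1r ?mul0r ?mulr0.
Qed.

Lemma OUT n (g : vertex -> C) x : (forall y, y \notin Dl n -> g y = 0) ->
  lsum (Dl n) g n.-1 = 0 -> x \notin Dl n -> app (Dl n) kM g x = 0.
Proof.
move=> hg hl xn; rewrite /app.
rewrite (eq_big_seq (fun y => (x == (n, 0%N))%:R * ((y.1 == n.-1)%:R * g y))); last first.
  move=> y yn; rewrite /kM /adj (out_parent xn yn).
  have -> : (y == parent K x) = false.
    by apply/negP => /eqP e; move: xn; rewrite (parent_in_imp (n := n)) // -e.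
  have -> : (x == y) = false by apply/negP => /eqP e; move: xn; rewrite e yn.
  by rewrite /= mul0r addr0 -mulnb natrM mulrA.
by rewrite -mulr_sumr -/(lsum _ _ _) hl mulr0.
Qed.


Lemma kids n z k : z \in Dl n ->
  \sum_(y <- Dl n) (y.1 == k)%:R * (z == parent K y)%:R
    = (K%:R * (z.1 == k.+1)%:R : C).
Proof.
move=> zn; rewrite sum_Dl.
rewrite (eq_bigr (fun k' => (k == k')%:R * \sum_(j <- iota 0 (K ^ (n - k')))
    (((z.1 == k'.+1) && ((j %/ K)%N == z.2))%:R : C))); last first.
  move=> k' _; rewrite mulr_sumr; apply: eq_bigr => j _ /=.
  rewrite (eq_sym k) /parent /=; congr (_ * _%:R).
  by case: (z) => z1 z2 /=; rewrite xpair_eqE (eq_sym z2).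
rewrite sum_ind ?iota_uniq // mem_iota add0n /=.
have := zn; rewrite mem_Dl => /andP[hz1 hz2].
case: (eqVneq z.1 k.+1) => hz.
  have hk : (k < n)%N by rewrite -ltnS -hz ltnW // ltnS.
  rewrite hk mulr1 /=.
  move: hz2; rewrite hz => hz2.
  by rewrite -(subnSK hk) expnS cnt_div hz2 muln1.
by rewrite mulr0; case: ifP => // _; rewrite big1.
Qed.

Lemma LS n (g : vertex -> C) k : (forall j, lsum (Dl n) g j = 0) ->
  lsum (Dl n) (app (Dl n) kM g) k = 0.
Proof.
move=> hg; rewrite /lsum /app.
under eq_bigr do rewrite mulr_sumr.
rewrite exchange_big /=.
pose w (z : vertex) := (K%:R * (z.1 == k.+1)%:R + (z.1.+1 == k)%:R * (k < n)%:R
     + (z.1 == k)%:R * (z.1 == 0%N)%:R * b%:C : C).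
rewrite (eq_big_seq (fun z => w z * g z)); last first.
  move=> z zn; under eq_bigr do rewrite mulrA.
  rewrite -mulr_suml; congr (_ * _).
  rewrite /w /kM.
  under eq_bigr do rewrite mulrDr.
  rewrite big_split /=; congr (_ + _); last first.
    rewrite (eq_bigr (fun y => (z == y)%:R * ((y.1 == k)%:R * (y.1 == 0%N)%:R * b%:C))).
      by rewrite sum_ind ?uniq_Dl // zn.
    move=> y _; rewrite -mulnb natrM (eq_sym z); case: (y =P z) => [->|_];
      by rewrite ?mul1r ?mul0r ?mulr0 ?mulr1 ?mulrA.
  have adjE y : (adj K y z)%:R = ((z == parent K y)%:R + (y == parent K z)%:R : C).
    rewrite /adj; case: (z =P parent K y) => [e|_]; last by rewrite add0r.
    case: (y =P parent K z) => [e'|_]; last by rewrite addr0.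
    by move: e e'; rewrite /parent => -> /= /(congr1 fst) /= /eqP; rewrite -addn2 -{1}[y.1]addn0 eqn_add2l.
  under eq_bigr do rewrite adjE mulrDr.
  rewrite big_split /= kids //; congr (_ + _).
  rewrite (eq_bigr (fun y => (parent K z == y)%:R * (y.1 == k)%:R)); last first.
    by move=> y _; rewrite mulrC eq_sym.
  rewrite sum_ind ?uniq_Dl // (parent_in zn) /=.
  case: (ltnP z.1.+1 n) => h; case: eqP => [e|]; rewrite ?mul0r //.
    by rewrite -e h mulr1.
  by rewrite -e ltnNge h mulr0.
rewrite (eq_bigr (fun z => K%:R * ((z.1 == k.+1)%:R * g z) + (k < n)%:R * ((z.1.+1 == k)%:R * g z)
   + b%:C * ((k == 0%N)%:R * ((z.1 == k)%:R * g z)))); last first.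
  move=> z _; rewrite /w !mulrDl; congr (_ + _ + _); first by rewrite mulrA.
    by rewrite mulrCA mulrA.
  case: (z.1 =P k) => [->|_]; last by rewrite !mul0r !mulr0.
  by rewrite /=; ring.
rewrite !big_split /= -!mulr_sumr -/(lsum _ _ _) hg -/(lsum (Dl n) g k) hg.
rewrite !mulr0 add0r addr0; clear w.
case: k => [|j]; first by rewrite big1 ?mulr0 // => z _; rewrite mul0r.
under eq_bigr do rewrite eqSS.
by rewrite -/(lsum _ _ _) hg mulr0.
Qed.


Lemma herm_real s (k : vertex -> vertex -> C) (r : vertex -> vertex -> R) :
  (forall x y, k x y = (r x y)%:C) -> (forall x y, r y x = r x y) -> herm s k.
Proof. by move=> hk hr x y _ _; rewrite !hk conjc_real hr. Qed.

Lemma herm_kM s : herm s kM.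
Proof.
apply: (@herm_real _ _ (fun x y => (adj K x y)%:R + ((x == y) && (x.1 == 0%N))%:R * b)).
  by move=> x y; rewrite /kM rmorphD rmorphM !rmorph_nat.
move=> x y /=; rewrite /adj orbC; congr (_ + _).
by case: (x =P y) => [->|]; rewrite ?eqxx // => /eqP; rewrite eq_sym => /negbTE ->.
Qed.

Lemma herm_kP s n : herm s (kP n).
Proof.
apply: (@herm_real _ _ (fun x y => (x == y)%:R - (x.1 == y.1)%:R * (((K ^ (n - x.1))%N)%:R)^-1)).
  by move=> x y; rewrite /kP /cP rmorphB rmorphM fmorphV !rmorph_nat.
move=> x y /=; rewrite eq_sym (eq_sym y.1); congr (_ - _).
by case: (x.1 =P y.1) => [->|]; rewrite ?mul0r.
Qed.

Lemma herm_kQ s n : herm s (kQ n).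
Proof.
apply: (@herm_real _ _ (fun x y => ((x \in Dl n) && (y \in Dl n))%:R *
   ((x == y)%:R - (x.1 == y.1)%:R * (((K ^ (n - x.1))%N)%:R)^-1))).
  by move=> x y; rewrite /kQ /kP /cP rmorphM rmorphB rmorphM fmorphV !rmorph_nat.
move=> x y /=; rewrite andbC eq_sym (eq_sym y.1); congr (_ * (_ - _)).
by case: (x.1 =P y.1) => [->|]; rewrite ?mul0r.
Qed.

Lemma hypPM n f x : x \in Dl n ->
  app (Dl n) (kP n) (app (Dl n) kM (app (Dl n) (kP n) f)) x
  = app (Dl n) kM (app (Dl n) (kP n) f) x.
Proof.
move=> xn; rewrite appP // LS ?mul0r ?subr0 // => j; exact: lsumP.
Qed.

Lemma QA n f x : app (Dl n.+1) (kQ n) f x = (x \in Dl n)%:R * app (Dl n) (kP n) f x.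
Proof.
rewrite /app /kQ.
rewrite (eq_bigr (fun y => (x \in Dl n)%:R * ((y \in Dl n)%:R * kP n x y * f y))); last first.
  by move=> y _; rewrite -mulnb natrM !mulrA.
rewrite -mulr_sumr; congr (_ * _).
rewrite (@sum_same _ _ _ (Dl n)) ?uniq_Dl //.
- by apply: eq_big_seq => y ->; rewrite mul1r.
- by move=> y yn; rewrite (_ : (y \in Dl n) = false) ?mul0r //; apply/negP => /Dl_sub; apply/negP.
- by move=> y /negbTE ->; rewrite !mul0r.
Qed.

Lemma Q_out n f y : y \notin Dl n -> app (Dl n.+1) (kQ n) f y = 0.
Proof. by move=> /negbTE yn; rewrite QA yn mul0r. Qed.

Lemma Q_in n f y : y \in Dl n -> app (Dl n.+1) (kQ n) f y = app (Dl n) (kP n) f y.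
Proof. by move=> yn; rewrite QA yn mul1r. Qed.

Lemma lsum_sub n (g : vertex -> C) k : (forall y, y \notin Dl n -> g y = 0) ->
  lsum (Dl n.+1) g k = lsum (Dl n) g k.
Proof.
move=> hg; apply: sum_same; rewrite ?uniq_Dl //.
  by move=> y yn; rewrite hg ?mulr0 //; apply/negP => /Dl_sub; apply/negP.
by move=> y /hg ->; rewrite mulr0.
Qed.

Lemma lsum_subn m n (g : vertex -> C) k : (m <= n)%N ->
  (forall y, y \notin Dl m -> g y = 0) -> lsum (Dl n) g k = lsum (Dl m) g k.
Proof.
move=> hmn hg; apply: sum_same; rewrite ?uniq_Dl //.
  by move=> y yn; rewrite hg ?mulr0 //; apply/negP => /(Dl_subn hmn); apply/negP.
by move=> y /hg ->; rewrite mulr0.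
Qed.

Lemma lsumQt n f k : lsum (Dl n) (app (Dl n.+1) (kQ n) f) k = 0.
Proof.
rewrite -(lsumP n f k); apply: eq_big_seq => y yn; by rewrite Q_in.
Qed.

Lemma lsumQ n f k : lsum (Dl n.+1) (app (Dl n.+1) (kQ n) f) k = 0.
Proof. by rewrite lsum_sub ?lsumQt // => y; apply: Q_out. Qed.

Lemma hypQP n f x : x \in Dl n.+1 ->
  app (Dl n.+1) (kP n.+1) (app (Dl n.+1) (kQ n) f) x = app (Dl n.+1) (kQ n) f x.
Proof. by move=> xn; rewrite appP // lsumQ mul0r subr0. Qed.

Lemma hypQM n f x : x \in Dl n.+1 ->
  app (Dl n.+1) (kQ n) (app (Dl n.+1) kM (app (Dl n.+1) (kQ n) f)) x
  = app (Dl n.+1) kM (app (Dl n.+1) (kQ n) f) x.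
Proof.
move=> xs; set g := app (Dl n.+1) (kQ n) f.
have gout : forall y, y \notin Dl n -> g y = 0 by move=> y; apply: Q_out.
have hE y : app (Dl n.+1) kM g y = app (Dl n) kM g y.
  apply: sum_same; rewrite ?uniq_Dl //.
    by move=> z zn; rewrite gout ?mulr0 //; apply/negP => /Dl_sub; apply/negP.
  by move=> z /gout ->; rewrite mulr0.
rewrite QA hE; case: (boolP (x \in Dl n)) => xn; last first.
  by rewrite mul0r OUT // lsumQt.
rewrite mul1r appP // (_ : lsum (Dl n) _ _ = 0) ?mul0r ?subr0 //.
rewrite /lsum (eq_big_seq (fun y => (y.1 == x.1)%:R * app (Dl n) kM g y)); last first.
  by move=> y _; rewrite hE.
exact: (LS _ (lsumQt n f)).
Qed.


Lemma finner_conj s (f g : vertex -> C) : finner s f g = conjc (finner s g f).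
Proof.
rewrite /finner rmorph_sum; apply: eq_bigr => y _.
by rewrite rmorphM /= conjcK mulrC.
Qed.

Lemma finner_adj s k (f g : vertex -> C) : herm s k ->
  finner s (app s k f) g = finner s f (app s k g).
Proof.
move=> hk; rewrite /finner /app.
under eq_bigr do rewrite mulr_suml.
rewrite exchange_big /=; apply: eq_big_seq => y ys.
rewrite rmorph_sum mulr_sumr; apply: eq_big_seq => x xs.
by rewrite rmorphM /= (hk x y) // conjcK mulrCA !mulrA.
Qed.

Lemma finner_eq s (f f' g g' : vertex -> C) : (forall x, x \in s -> f x = f' x) ->
  (forall x, x \in s -> g x = g' x) -> finner s f g = finner s f' g'.
Proof. by move=> hf hg; apply: eq_big_seq => x xs; rewrite hf ?hg. Qed.

Lemma finner_scr s (f g : vertex -> C) c :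
  finner s f (fun y => c * g y) = conjc c * finner s f g.
Proof.
rewrite /finner mulr_sumr; apply: eq_bigr => y _; by rewrite rmorphM mulrCA.
Qed.

Lemma finner_scl s (f g : vertex -> C) c :
  finner s (fun y => c * f y) g = c * finner s f g.
Proof. by rewrite /finner mulr_sumr; apply: eq_bigr => y _; rewrite mulrA. Qed.

Record data := Data { de : nat -> vertex -> C; ddM : nat -> C;
  ddP : nat -> C; ddQ : nat -> C }.

Definition good n (d : data) : Prop :=
 [/\ (forall a x, x \notin Dl n.+1 -> de d a x = 0),
     (forall a c, (a < size (Dl n.+1))%N -> (c < size (Dl n.+1))%N ->
        finner (Dl n.+1) (de d a) (de d c) = (a == c)%:R),
     (forall a x, (a < size (Dl n.+1))%N -> x \in Dl n.+1 ->
        [/\ app (Dl n.+1) kM (de d a) x = ddM d a * de d a x,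
            app (Dl n.+1) (kP n.+1) (de d a) x = ddP d a * de d a x &
            app (Dl n.+1) (kQ n) (de d a) x = ddQ d a * de d a x]) &
     (forall f, (forall a, (a < size (Dl n.+1))%N -> finner (Dl n.+1) f (de d a) = 0) ->
        forall x, x \in Dl n.+1 -> f x = 0)].

Lemma ex_good n : exists d, good n d.
Proof.
have := @generic R _ (uniq_Dl n.+1) _ _ _ (@herm_kM (Dl n.+1)) (@herm_kP (Dl n.+1) n.+1) (@herm_kQ (Dl n.+1) n)
  (fun f x => @hypPM n.+1 f x) (@hypQM n) (@hypQP n).
by case=> e [dM [dP [dQ H]]]; exists (Data e dM dP dQ).
Qed.

Definition pick n : data :=
  proj1_sig (ClassicalEpsilon.constructive_indefinite_description _ (ex_good n)).
Lemma pickP n : good n (pick n).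
Proof. exact: proj2_sig (ClassicalEpsilon.constructive_indefinite_description _ (ex_good n)). Qed.

Definition sel (p : nat * nat) : bool :=
  [&& (p.2 < size (Dl p.1.+1))%N, ddP (pick p.1) p.2 != 0 & ddQ (pick p.1) p.2 == 0].

Lemma sel_lsum n a k : (a < size (Dl n.+1))%N -> ddP (pick n) a != 0 ->
  lsum (Dl n.+1) (de (pick n) a) k = 0.
Proof.
move=> ha hP; have [_ _ he _] := pickP n.
have := lsumP n.+1 (de (pick n) a) k.
rewrite /lsum (eq_big_seq (fun y => ddP (pick n) a * ((y.1 == k)%:R * de (pick n) a y))); last first.
  by move=> y ys; have [_ -> _] := he a y ha ys; rewrite mulrCA.
by rewrite -mulr_sumr => /eqP; rewrite mulf_eq0 (negbTE hP) => /eqP.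
Qed.

Lemma sel_eigen n a x : (a < size (Dl n.+1))%N -> ddP (pick n) a != 0 ->
  AplusB K b (de (pick n) a) x = ddM (pick n) a * de (pick n) a x.
Proof.
move=> ha hP; have [hs _ he _] := pickP n.
rewrite (AB_app x (uniq_Dl n.+1) (hs a)).
case: (boolP (x \in Dl n.+1)) => xs; first by have [-> _ _] := he a x ha xs.
by rewrite (hs a x xs) mulr0 (OUT (hs a)) ?sel_lsum.
Qed.

Lemma cross n m a c : (m < n)%N -> sel (n, a) -> sel (m, c) ->
  finner (Dl n.+1) (de (pick n) a) (de (pick m) c) = 0.
Proof.
move=> hmn /and3P[ha hPa hQa] /and3P[hc hPc hQc]; simpl in *.
have [hs _ he _] := pickP n; have [hs' _ _ _] := pickP m.
set e := de (pick n) a; set e' := de (pick m) c.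
have e'out y : y \notin Dl n -> e' y = 0.
  move=> yn; apply: hs'; apply/negP => /(Dl_subn hmn); apply/negP: yn.
have hQ : forall y, y \in Dl n.+1 -> app (Dl n.+1) (kQ n) e' y = e' y.
  move=> y ys; rewrite QA; case: (boolP (y \in Dl n)) => yn; last by rewrite mul0r e'out.
  by rewrite mul1r appP // (lsum_subn _ hmn (hs' c)) sel_lsum // mul0r subr0.
rewrite (@finner_eq (Dl n.+1) e e e' (app (Dl n.+1) (kQ n) e')) //; last first.
  by move=> y ys; rewrite hQ.
rewrite -finner_adj; last exact: herm_kQ.
rewrite (@finner_eq (Dl n.+1) _ (fun y => ddQ (pick n) a * e y) e' e') //; last first.
  by move=> y ys; have [_ _ ->] := he a y ha ys.
by rewrite finner_scl (eqP hQa) mul0r.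
Qed.


Definition Iset := {p : nat * nat | sel p}.

Lemma sum_const_iotaR a m (c : R) : \sum_(j <- iota a m) c = c *+ m.
Proof.
rewrite big_const_seq count_predT size_iota.
by elim: m => [|m IH] //=; rewrite IH mulrS.
Qed.

Lemma sqnorm0 (z : C) : sqnorm z = 0 -> z = 0.
Proof.
case: z => x y; rewrite /sqnorm /= => /eqP; rewrite paddr_eq0 ?sqr_ge0 //.
by rewrite !sqrf_eq0 => /andP[/eqP -> /eqP ->].
Qed.

Lemma compl (psi : vertex -> C) : l2 psi ->
  (forall p : Iset, finner (Dl (val p).1.+1) psi (de (pick (val p).1) (val p).2) = 0) ->
  forall x, psi x = 0.
Proof.
move=> [M hM] hort.
have IH : forall n x, x \in Dl n -> app (Dl n) (kP n) psi x = 0.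
  elim=> [|n IHn] x; first by rewrite mem_Dl.
  have [hs ho he hc] := pickP n.
  apply: hc => a ha.
  rewrite finner_adj; last exact: herm_kP.
  rewrite (@finner_eq (Dl n.+1) psi psi _ (fun y => ddP (pick n) a * de (pick n) a y)) //; last first.
    by move=> y ys; have [_ -> _] := he a y ha ys.
  rewrite finner_scr.
  case: (eqVneq (ddP (pick n) a) 0) => [->|hP]; first by rewrite rmorph0 mul0r.
  case: (eqVneq (ddQ (pick n) a) 0) => [hQ|hQ].
    have hsel : sel (n, a) by rewrite /sel /= ha hP hQ eqxx.
    by have := hort (exist _ (n, a) hsel); rewrite /= => ->; rewrite mulr0.
  suff : conjc (ddQ (pick n) a) * finner (Dl n.+1) psi (de (pick n) a) = 0.
    by move/eqP; rewrite mulf_eq0 conjc_eq0 (negbTE hQ) /= => /eqP ->; rewrite mulr0.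
  rewrite -finner_scr.
  rewrite (@finner_eq (Dl n.+1) psi psi _ (app (Dl n.+1) (kQ n) (de (pick n) a))) //; last first.
    by move=> y ys; have [_ _ ->] := he a y ha ys.
  rewrite -finner_adj; last exact: herm_kQ.
  rewrite /finner big1 // => y _; rewrite QA.
  by case: (boolP (y \in Dl n)) => yn; rewrite ?mul0r // IHn // mulr0 mul0r.
have layer : forall k j, psi (k, j) = psi (k, 0%N).
  move=> k j; pose n := (k + j).+1.
  have hmem : forall j', (j' <= j)%N -> (k, j') \in Dl n.
    move=> j' hj'; rewrite mem_Dl /= /n ltnS leq_addr /=.
    rewrite subSn ?leq_addr // addKn.
    apply: leq_ltn_trans hj' _; apply: ltn_trans (ltn_expl _ K2) _.
    by rewrite ltn_exp2l.
  have h1 := IH n _ (hmem j (leqnn j)); have h2 := IH n _ (hmem 0%N (leq0n j)).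
  rewrite appP ?hmem // in h1; rewrite appP ?hmem // in h2.
  by move/eqP: h1; move/eqP: h2; rewrite !subr_eq0 /= => /eqP -> /eqP ->.
move=> [k j]; rewrite layer.
pose q := sqnorm (psi (k, 0%N)).
have hq : forall L : nat, q *+ L <= M.
  move=> L; have := hM [seq (k, j') | j' <- iota 0 L].
  rewrite map_inj_uniq ?iota_uniq; last by move=> ? ? [].
  move=> /(_ isT); rewrite big_map.
  by rewrite (eq_bigr (fun _ => q)) ?sum_const_iotaR // => j' _; rewrite layer.
have q0 : 0 <= q by rewrite /q /sqnorm addr_ge0 ?sqr_ge0.
have M0 : 0 <= M by have := hq 0%N; rewrite mulr0n.
apply: sqnorm0; rewrite -/q; apply/eqP; rewrite eq_le q0 andbT.
rewrite leNgt; apply/negP => qpos.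
have := archi_boundP (divr_ge0 M0 q0).
set L := Num.Def.archi_bound _ => hL.
have := hq L; rewrite leNgt => /negP; apply.
by rewrite -mulr_natl -ltr_pdivrMr.
Qed.


Lemma main : has_fin_supp_eigen_ONB K b.
Proof.
exists Iset, (fun p => de (pick (val p).1) (val p).2),
  (fun p => ddM (pick (val p).1) (val p).2), (fun p => Dl (val p).1.+1).
split.
- move=> [[n a] hp] /=; split; first exact: uniq_Dl.
  by have [hs _ _ _] := pickP n; apply: hs.
- by move=> [[n a] /and3P[ha hP _]] x /=; apply: sel_eigen.
- by move=> [[n a] /and3P[ha _ _]] /=; have [_ ho _ _] := pickP n; rewrite ho // eqxx.
- move=> [[n a] hi] [[m c] hj] /= hne.
  case: (ltngtP n m) => hnm.
  + by rewrite finner_conj (cross hnm hj hi) rmorph0.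
  + rewrite -(cross hnm hi hj); apply: sum_same; rewrite ?uniq_Dl //.
      by move=> y ym; have [hs _ _ _] := pickP m; rewrite hs // rmorph0 mulr0.
    by move=> y yn; have [hs _ _ _] := pickP n; rewrite hs // mul0r.
  + subst m; have [_ ho _ _] := pickP n.
    have hac : a != c.
      apply/negP => /eqP e; subst c; apply: hne; congr exist; exact: bool_irrelevance.
    have /and3P[ha _ _] := hi; have /and3P[hc _ _] := hj.
    by rewrite ho // (negbTE hac).
- by move=> psi hpsi hort x; apply: compl.
Qed.

End Graph.

Theorem theorem1p4 (R : realType) (K : nat) (b : R) :
  (2 <= K)%N -> has_fin_supp_eigen_ONB K b.
Proof. by move=> hK; apply: main. Qed.
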